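(* Let $n\ge 2$ be an integer, let $A$ be a complex Banach algebra, and let $p\in(0,1)$, $\theta\in[0,\infty)$ be real numbers. Suppose $f:A\to A$ satisfies $$\Big\|\mu f\Big(\frac{x+y}{2}\Big)+\mu f\Big(\frac{x-y}{2}\Big)-f(\mu x)+f(a^n)-\big(f(a)a^{n-1}+af(a)a^{n-2}+\cdots+a^{n-2}f(a)a+a^{n-1}f(a)\big)\Big\|\le \theta(\|x\|^p+\|y\|^p+\|a\|^p)$$ for all $\mu\in\mathbb{T}$ and all $x,y,a\in A$. Then there exists a unique $n$-Jordan derivation $D:A\to A$ such that $$\|f(x)-D(x)\|\le \frac{2^p\theta}{2-2^p}\|x\|^p$$ for all $x\in A$.
   Context: $\mathbb{T}=\{\mu\in\mathbb{C}:|\mu|=1\}$. For an integer $n\ge 2$, an $n$-Jordan derivation on an algebra $A$ is a linear map $D:A\to A$ such that $D(a^n)=D(a)a^{n-1}+aD(a)a^{n-2}+\cdots+a^{n-2}D(a)a+a^{n-1}D(a)$ for all $a\in A$. *)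

(* Defs.v *)
From HB Require Import structures.
From mathcomp Require Import all_boot all_order all_algebra.
From mathcomp Require Import all_classical all_reals all_analysis.
From mathcomp Require Import complex.
Set Implicit Arguments. Unset Strict Implicit. Unset Printing Implicit Defensive.
Import Order.TTheory GRing.Theory Num.Theory.
Local Open Scope ring_scope.

(* In MathComp-Analysis the norm of a
   normedModType over R[i] takes values in R[i] (it is always real and
   nonnegative); [nrm] is its real part, i.e. the usual real-valued norm. *)

Definition nrm (R : realType) (A : normedModType R[i]) (x : A) : R :=
  complex.Re `|x|.

Definition banach_algebra_mul (R : realType) (A : completeNormedModType R[i])
    (mul : A -> A -> A) : Prop :=
  (forall x y z, mul x (mul y z) = mul (mul x y) z) /\
  [/\ (forall x y z, mul (x + y) z = mul x z + mul y z),
      (forall x y z, mul x (y + z) = mul x y + mul x z),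
      (forall (c : R[i]) x y, mul (c *: x) y = c *: mul x y),
      (forall (c : R[i]) x y, mul x (c *: y) = c *: mul x y)
    & (forall x y, nrm (mul x y) <= nrm x * nrm y)].

(* a^k * y (with a^0 * y = y) and y * a^k (with y * a^0 = y); these avoid
   needing a unit for a^0 in a possibly non-unital algebra. *)
Definition lpow (A : Type) (mul : A -> A -> A) (a : A) (k : nat) (y : A) : A :=
  iter k (mul a) y.
Definition rpow (A : Type) (mul : A -> A -> A) (a : A) (k : nat) (y : A) : A :=
  iter k (fun z => mul z a) y.

Definition apow (A : Type) (mul : A -> A -> A) (a : A) (n : nat) : A :=
  lpow mul a n.-1 a.

Definition jordan_sum (R : realType) (A : completeNormedModType R[i])
    (mul : A -> A -> A) (n : nat) (D : A -> A) (a : A) : A :=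
  \sum_(i < n) lpow mul a i (rpow mul a (n - 1 - i) (D a)).

Definition n_jordan_derivation (R : realType) (A : completeNormedModType R[i])
    (mul : A -> A -> A) (n : nat) (D : A -> A) : Prop :=
  (forall (c : R[i]) x y, D (c *: x + y) = c *: D x + D y) /\
  (forall a, D (apow mul a n) = jordan_sum mul n D a).

(* Main.v *)
Require Import Defs.
From HB Require Import structures.
From mathcomp Require Import all_boot all_order all_algebra.
From mathcomp Require Import all_classical all_reals all_analysis.
From mathcomp Require Import complex.
From mathcomp Require Import zify ring lra.
Import Order.TTheory GRing.Theory Num.Theory.
Local Open Scope ring_scope.
Local Open Scope complex_scope.
Local Open Scope classical_set_scope.
Section S.
Variables (R : realType) (A : completeNormedModType R[i]).
Lemma nrmE (x : A) : `|x| = (nrm x)%:C.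
Proof.
have := normr_ge0 x; rewrite lecE /= => /andP[/eqP h _].
rewrite /nrm; case: (`|x|) h => a b /= ->. by [].
Qed.
Lemma nrm_ge0 (x : A) : 0 <= nrm x.
Proof. by have := normr_ge0 x; rewrite nrmE lecR. Qed.
Lemma nrmD (x y : A) : nrm (x + y) <= nrm x + nrm y.
Proof. by have := ler_normD x y; rewrite !nrmE -rmorphD lecR. Qed.
Lemma nrmZ (r : R) (x : A) : nrm (r%:C *: x) = `|r| * nrm x.
Proof.
have := normrZ r%:C x; rewrite !nrmE normc_def /= expr0n /= addr0 sqrtr_sqr.
by rewrite -rmorphM => -[].
Qed.
Lemma nrmZu (c : R[i]) (x : A) : `|c| = 1 -> nrm (c *: x) = nrm x.
Proof. by move=> h; rewrite /nrm normrZ h mul1r. Qed.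
Lemma nrm_eq0 (x : A) : nrm x = 0 -> x = 0.
Proof. by move=> h; apply/normr0_eq0; rewrite nrmE h. Qed.
Lemma nrmN (x : A) : nrm (- x) = nrm x.
Proof. by rewrite /nrm normrN. Qed.
Lemma nrmB (x y : A) : nrm (x - y) = nrm (y - x).
Proof. by rewrite /nrm distrC. Qed.
Lemma nrm0 : nrm (0 : A) = 0.
Proof. by rewrite /nrm normr0. Qed.
Lemma lim_eps (u : nat -> A) (l : A) : u @ \oo --> l ->
  forall e : R, 0 < e -> exists N, forall m, (N <= m)%N -> nrm (u m - l) < e.
Proof.
move=> /cvgr_distC_lt h e e0.
have := h e%:C; rewrite ltcR => /(_ e0) [N _ hN].
exists N => m Nm; have := hN m Nm; by rewrite nrmE ltcR.
Qed.

Lemma cauchy_lim (u : nat -> A) :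
  (forall e : R, 0 < e -> exists N, forall m, (N <= m)%N -> nrm (u m - u N) < e) ->
  u @ \oo --> lim (u @ \oo).
Proof.
move=> h; apply: cauchy_cvg; apply: cauchy_exP => e e0.
have ee : e = (complex.Re e)%:C.
  by move: e0; case: e => a b; rewrite ltcE /= => /andP[/eqP -> _].
have r0 : 0 < complex.Re e by move: e0; rewrite ltcE => /andP[].
have [N hN] := h _ r0.
exists (u N); rewrite /fmapE -ball_normE /ball_; exists N => // m Nm /=.
by rewrite ee distrC nrmE ltcR; apply: hN.
Qed.
Lemma nrm_sum m (F : 'I_m -> A) : nrm (\sum_(i<m) F i) <= \sum_(i<m) nrm (F i).
Proof.
elim/big_rec2: _ => [|i y x _ h]; first by rewrite nrm0.
by apply: le_trans (nrmD _ _) _; rewrite lerD2l.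
Qed.
Section Alg.
Variable (mul : A -> A -> A) (hmul : banach_algebra_mul mul).
Lemma mulDl x y z : mul (x + y) z = mul x z + mul y z. Proof. by case: hmul => _ []. Qed.
Lemma mulDr x y z : mul x (y + z) = mul x y + mul x z. Proof. by case: hmul => _ []. Qed.
Lemma mulZl c x y : mul (c *: x) y = c *: mul x y. Proof. by case: hmul => _ []. Qed.
Lemma mulZr c x y : mul x (c *: y) = c *: mul x y. Proof. by case: hmul => _ []. Qed.
Lemma nrm_mul x y : nrm (mul x y) <= nrm x * nrm y. Proof. by case: hmul => _ []. Qed.
Lemma mul0x y : mul 0 y = 0.
Proof. by have := mulZl 0 0 y; rewrite !scale0r. Qed.
Lemma mulx0 y : mul y 0 = 0.
Proof. by have := mulZr 0 y 0; rewrite !scale0r. Qed.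

Lemma lpowD a k u v : lpow mul a k (u + v) = lpow mul a k u + lpow mul a k v.
Proof. by elim: k => //= k IH; rewrite /lpow /= -!/(lpow _ _ _ _) IH mulDr. Qed.
Lemma lpowZ a k c u : lpow mul a k (c *: u) = c *: lpow mul a k u.
Proof. by elim: k => //= k IH; rewrite /lpow /= -!/(lpow _ _ _ _) IH mulZr. Qed.
Lemma rpowD a k u v : rpow mul a k (u + v) = rpow mul a k u + rpow mul a k v.
Proof. by elim: k => //= k IH; rewrite /rpow /= -!/(rpow _ _ _ _) IH mulDl. Qed.
Lemma rpowZ a k c u : rpow mul a k (c *: u) = c *: rpow mul a k u.
Proof. by elim: k => //= k IH; rewrite /rpow /= -!/(rpow _ _ _ _) IH mulZl. Qed.
Lemma lpow_sc a k c u : lpow mul (c *: a) k u = c ^+ k *: lpow mul a k u.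
Proof.
elim: k => [|k IH]; first by rewrite scale1r.
by rewrite /lpow /= -!/(lpow _ _ _ _) IH mulZl mulZr scalerA exprS.
Qed.
Lemma rpow_sc a k c u : rpow mul (c *: a) k u = c ^+ k *: rpow mul a k u.
Proof.
elim: k => [|k IH]; first by rewrite scale1r.
by rewrite /rpow /= -!/(rpow _ _ _ _) IH mulZl mulZr scalerA exprSr.
Qed.
Lemma nrm_lpow a k u : nrm (lpow mul a k u) <= nrm a ^+ k * nrm u.
Proof.
elim: k => [|k IH]; first by rewrite mul1r.
rewrite /lpow /= -!/(lpow _ _ _ _) exprS -mulrA.
apply: le_trans (nrm_mul _ _) _; apply: ler_wpM2l => //; exact: nrm_ge0.
Qed.
Lemma nrm_rpow a k u : nrm (rpow mul a k u) <= nrm a ^+ k * nrm u.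
Proof.
elim: k => [|k IH]; first by rewrite mul1r.
rewrite /rpow /= -!/(rpow _ _ _ _) exprSr mulrAC.
apply: le_trans (nrm_mul _ _) _; apply: ler_wpM2r => //; exact: nrm_ge0.
Qed.
Lemma lpow0 a k : lpow mul a k 0 = 0.
Proof. by elim: k => //= k IH; rewrite /lpow /= -!/(lpow _ _ _ _) IH mulx0. Qed.
Lemma rpow0 a k : rpow mul a k 0 = 0.
Proof. by elim: k => //= k IH; rewrite /rpow /= -!/(rpow _ _ _ _) IH mul0x. Qed.

Variable n : nat.
Definition J (a v : A) := \sum_(i < n) lpow mul a i (rpow mul a (n - 1 - i) v).
Lemma JD a u v : J a (u + v) = J a u + J a v.
Proof. by rewrite /J -big_split; apply: eq_bigr => i _; rewrite rpowD lpowD. Qed.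
Lemma JZ a c u : J a (c *: u) = c *: J a u.
Proof. by rewrite /J scaler_sumr; apply: eq_bigr => i _; rewrite rpowZ lpowZ. Qed.
Lemma JB a u v : J a (u - v) = J a u - J a v.
Proof. by rewrite JD -scaleN1r JZ scaleN1r. Qed.
Lemma J0 a : J a 0 = 0.
Proof. by rewrite /J big1 // => i _; rewrite rpow0 lpow0. Qed.
Lemma nrmJ a v : nrm (J a v) <= n%:R * (nrm a ^+ (n - 1) * nrm v).
Proof.
rewrite /J. apply: le_trans; first exact: nrm_sum.
have -> : n%:R * (nrm a ^+ (n - 1) * nrm v) = \sum_(i < n) (nrm a ^+ (n - 1) * nrm v) by rewrite sumr_const card_ord mulr_natl.
apply: ler_sum => i _.
apply: le_trans (nrm_lpow _ _ _) _.
apply: le_trans (ler_wpM2l _ (nrm_rpow _ _ _)) _.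
  by apply: exprn_ge0; exact: nrm_ge0.
rewrite mulrA -exprD; have -> : (i + (n - 1 - i) = n - 1)%N.
  by have := ltn_ord i; lia.
by [].
Qed.
Lemma J_sc a c v : J (c *: a) v = c ^+ (n - 1) *: J a v.
Proof.
rewrite /J scaler_sumr; apply: eq_bigr => i _.
rewrite rpow_sc lpowZ lpow_sc scalerA -exprD.
have -> : (n - 1 - i + i = n - 1)%N by have := ltn_ord i; lia.
by [].
Qed.
Lemma apow_sc a c : (0 < n)%N -> apow mul (c *: a) n = c ^+ n *: apow mul a n.
Proof.
move=> n0; rewrite /apow lpow_sc lpowZ scalerA -exprSr.
by have -> : (n.-1.+1 = n) by lia.
Qed.
Lemma apow0 : apow mul 0 n = 0.
Proof. by rewrite /apow lpow0. Qed.
End Alg.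
Lemma nrm_le0 (x : A) : nrm x <= 0 -> x = 0.
Proof. by move=> h; apply: nrm_eq0; apply/eqP; rewrite eq_le h nrm_ge0. Qed.

Section Main.
Variables (mul : A -> A -> A) (n : nat) (p theta : R) (f : A -> A).
Hypotheses (hmul : banach_algebra_mul mul) (hn : (2 <= n)%N) (hp : 0 < p < 1)
  (ht : 0 <= theta).
Hypothesis H : (forall (mu : R[i]) (x y a : A), `|mu| = 1 ->
     nrm (mu *: f ((2%:R : R[i])^-1 *: (x + y))
          + mu *: f ((2%:R : R[i])^-1 *: (x - y))
          - f (mu *: x)
          + f (apow mul a n)
          - jordan_sum mul n f a)
     <= theta * (nrm x `^ p + nrm y `^ p + nrm a `^ p)).

Lemma p0 : p != 0. Proof. by case/andP: hp => /gt_eqF ->. Qed.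
Lemma pw0 : (0 : R) `^ p = 0. Proof. by rewrite powR0 // p0. Qed.

Lemma f0 : f 0 = 0.
Proof.
have h1 := H 1 0 0 0 (normr1 _).
have h2 := H (-1) 0 0 0 (normrN1 _).
rewrite addr0 subrr scaler0 !scale1r (@apow0 _ hmul n) in h1. rewrite nrm0 pw0 !addr0 mulr0 in h1.
rewrite addr0 subrr scaler0 (@apow0 _ hmul n) in h2. rewrite nrm0 pw0 !addr0 mulr0 in h2.
move/nrm_le0: h1 => h1; move/nrm_le0: h2.
rewrite !scaleN1r oppr0; move: h1.
set j := jordan_sum _ _ _ _ => h1 h2.
have : (-4%:R : R[i]) *: f 0 = - f 0 - f 0 - f 0 + f 0 - j.
  rewrite -(subr0_eq h1); set a := f 0.
  rewrite -[a in RHS]scale1r -!scaleNr -!scalerDl -scalerBl.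
  by congr (_ *: _); rewrite !mulrS mulr0n; ring.
rewrite h2.
by move/eqP; rewrite scaler_eq0 oppr_eq0 pnatr_eq0 /= => /eqP.
Qed.
Lemma js0 : jordan_sum mul n f 0 = 0.
Proof.
have -> : jordan_sum mul n f 0 = J mul n 0 (f 0) by [].
by rewrite f0 (@J0 _ hmul).
Qed.

Lemma Hs mu x y : `|mu| = 1 ->
  nrm (mu *: f ((2%:R : R[i])^-1 *: (x + y)) + mu *: f ((2%:R : R[i])^-1 *: (x - y))
       - f (mu *: x)) <= theta * (nrm x `^ p + nrm y `^ p).
Proof.
move=> hmu; have := H mu x y 0 hmu.
rewrite (@apow0 _ hmul n) f0 js0 addr0 subr0.
by rewrite nrm0 pw0 addr0.
Qed.

Lemma half (z : A) : (2%:R : R[i])^-1 *: (z + z) = z.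
Proof.
rewrite -mulr2n -(scaler_nat 2 z) scalerA mulVf ?scale1r // pnatr_eq0.
Qed.

Lemma add_approx x y :
  nrm (f (x + y) - f x - f y) <= theta * (nrm (x + y) `^ p + nrm (x - y) `^ p).
Proof.
have := Hs 1 (x + y) (x - y) (normr1 _); rewrite !scale1r.
have -> : x + y + (x - y) = x + x by rewrite addrACA subrr addr0.
have -> : x + y - (x - y) = y + y by rewrite opprB addrC addrA subrK.
rewrite !half.
have -> : f (x + y) - f x - f y = - (f x + f y - f (x + y)).
  by rewrite opprB opprD addrA.
by rewrite nrmN.
Qed.

Lemma mu_approx mu x : `|mu| = 1 ->
  nrm (f (mu *: x) - mu *: f x) <= theta * (2 * nrm x `^ p).
Proof.
move=> hmu; have := Hs mu x x hmu.
rewrite half subrr scaler0 f0 scaler0 addr0 nrmB.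
by rewrite mulr_natl mulr2n.
Qed.

Lemma eqle (a b : R) : a = b -> a <= b. Proof. by move->. Qed.
Definition c (k : nat) : R[i] := ((2 : R) ^+ k)%:C.
Definition g k x := (c k)^-1 *: f (c k *: x).
Definition rr := 2 `^ p / (2 : R).
Definition M (x : A) := theta * nrm x `^ p.

Lemma pw2 m : ((2 : R) ^+ m) `^ p = (2 `^ p) ^+ m.
Proof.
by rewrite -powR_mulrn // -powRrM mulrC powRrM powR_mulrn // powR_ge0.
Qed.

Lemma two_p_lt2 : 2 `^ p < (2 : R).
Proof.
rewrite /powR (negbTE (_ : (2:R) != 0)) //.
rewrite -[X in _ < X]lnK ?posrE // ltr_expR.
case/andP: hp => _ p1; rewrite gtr_pMl //.
by apply: ln_gt0; rewrite ltr1n.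
Qed.

Lemma rr_gt0 : 0 < rr. Proof. by rewrite /rr divr_gt0 // powR_gt0. Qed.
Lemma rr_lt1 : rr < 1.
Proof. by rewrite /rr ltr_pdivrMr // mul1r two_p_lt2. Qed.
Lemma M_ge0 x : 0 <= M x.
Proof. by rewrite /M mulr_ge0 // powR_ge0. Qed.

Lemma c_nrm k (z : A) : nrm (c k *: z) = 2 ^+ k * nrm z.
Proof. by rewrite /c nrmZ ger0_norm // exprn_ge0. Qed.
Lemma cV k : (c k)^-1 = (((2:R) ^+ k)^-1)%:C.
Proof. by rewrite /c fmorphV. Qed.

Lemma g0 x : g 0 x = f x.
Proof. by rewrite /g /c expr0 invr1 !scale1r. Qed.

Lemma step k x : nrm (g k.+1 x - g k x) <= M x * rr ^+ k.+1.
Proof.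
set y := c k *: x.
have hy : c k.+1 *: x = y + y.
  rewrite /y -mulr2n -(scaler_nat 2 (c k *: x)) scalerA; congr (_ *: _).
  by rewrite /c exprS rmorphM rmorph_nat.
have e : g k x = (c k.+1)^-1 *: (f y + f y).
  rewrite /g -/y -mulr2n -(scaler_nat 2 (f y)) scalerA; congr (_ *: _).
  rewrite /c exprS rmorphM invfM rmorph_nat mulrAC mulVf ?mul1r //.
rewrite e /g hy -scalerBr cV nrmZ ger0_norm ?invr_ge0 ?exprn_ge0 //.
rewrite opprD addrA.
apply: le_trans (ler_wpM2l _ (add_approx y y)) _.
  by rewrite invr_ge0 exprn_ge0.
rewrite subrr nrm0 pw0 addr0 -hy c_nrm powRM ?exprn_ge0 ?nrm_ge0 // pw2.
rewrite /M /rr exprMn exprVn; apply: eqle; ring.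
Qed.
Lemma rr1 : 1 - rr != 0.
Proof. by rewrite subr_eq0 eq_sym lt_eqF // rr_lt1. Qed.

Lemma tele k j x : nrm (g (k + j) x - g k x) <= M x * rr ^+ k.+1 * (1 - rr ^+ j) / (1 - rr).
Proof.
elim: j => [|j IH]; first by rewrite addn0 subrr nrm0 expr0 subrr mulr0 mul0r.
have -> : g (k + j.+1) x - g k x = (g (k + j).+1 x - g (k + j) x) + (g (k + j) x - g k x).
  by rewrite addnS addrA subrK.
apply: le_trans (nrmD _ _) _; apply: le_trans (lerD (step _ _) IH) _.
apply: eqle; rewrite !exprS exprD; field; exact: rr1.
Qed.

Lemma tele2 k m x : (k <= m)%N -> nrm (g m x - g k x) <= M x * rr ^+ k.+1 / (1 - rr).
Proof.
move=> km; rewrite -(subnKC km); apply: le_trans (tele _ _ _) _.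
apply: ler_wpM2r; first by rewrite invr_ge0 subr_ge0 ltW // rr_lt1.
rewrite -[X in _ <= X]mulr1; apply: ler_wpM2l.
  by rewrite mulr_ge0 ?M_ge0 // exprn_ge0 // ltW // rr_gt0.
by rewrite gerBl exprn_ge0 // ltW // rr_gt0.
Qed.

Lemma geo C e : 0 <= C -> 0 < e -> exists N, forall m, (N <= m)%N -> C * rr ^+ m < e.
Proof.
move=> C0 e0.
have hr : `|rr| < 1 by rewrite ger0_norm ?rr_lt1 // ltW // rr_gt0.
have ec : 0 < e / (C + 1) by rewrite divr_gt0 // ltr_wpDl.
move: (cvg_expr hr) => /cvgr_dist_lt /(_ _ ec) [].
move=> N _ hN; exists N => m /hN /=; rewrite sub0r normrN ger0_norm ?exprn_ge0 ?ltW ?rr_gt0 //.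
rewrite ltr_pdivlMr ?ltr_wpDl // => h.
apply: le_lt_trans h; rewrite mulrC ler_wpM2l ?exprn_ge0 ?ltW ?rr_gt0 //.
by rewrite ltrDl.
Qed.

Lemma cvg_g x : (fun k => g k x) @ \oo --> lim ((fun k => g k x) @ \oo).
Proof.
apply: cauchy_lim => e e0.
have C0 : 0 <= M x * rr / (1 - rr).
  apply: divr_ge0; [apply: mulr_ge0; [exact: M_ge0 | exact: ltW rr_gt0] | by rewrite subr_ge0 ltW // rr_lt1].
have [N hN] := @geo _ e C0 e0.
exists N => m Nm; apply: le_lt_trans (@tele2 N m x Nm) _.
have := hN N (leqnn N); congr (_ < _); rewrite exprS; field; exact: rr1.
Qed.

Definition D x := lim ((fun k => g k x) @ \oo).
Definition Kc := (2 `^ p * theta) / (2 - 2 `^ p).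

Lemma D_bound x : nrm (f x - D x) <= Kc * nrm x `^ p.
Proof.
have hb m : nrm (g m x - f x) <= Kc * nrm x `^ p.
  rewrite -(g0 x); apply: le_trans (@tele2 0 m x (leq0n m)) _.
  apply: eqle; rewrite /M /Kc /rr expr1; field.
  by rewrite subr_eq0 gt_eqF // two_p_lt2.
apply/ler_addgt0Pr => e e0.
have [N hN] := @lim_eps _ _ (cvg_g x) _ e0.
have -> : f x - D x = (f x - g N x) + (g N x - D x) by rewrite addrA subrK.
apply: le_trans (nrmD _ _) _; apply: lerD; first by rewrite nrmB.
exact: ltW (hN N (leqnn N)).
Qed.
Lemma lim_geo0 (u : nat -> A) l C : u @ \oo --> l -> 0 <= C ->
  (forall m, nrm (u m) <= C * rr ^+ m) -> l = 0.
Proof.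
move=> hu C0 hb; apply: nrm_le0; apply/ler_addgt0Pr => e e0; rewrite add0r.
have e2 : 0 < e / 2 by rewrite divr_gt0.
have [N1 h1] := @lim_eps _ _ hu _ e2.
have [N2 h2] := @geo _ _ C0 e2.
set m := maxn N1 N2.
have -> : l = - (u m - l) + u m by rewrite opprB subrK.
apply: le_trans (nrmD _ _) _; rewrite nrmN.
rewrite [e](splitr e); apply: lerD; apply: ltW.
  by apply: h1; rewrite leq_maxl.
by apply: le_lt_trans (h2 m _); [apply: hb | rewrite leq_maxr].
Qed.

Lemma Dadd x y : D (x + y) = D x + D y.
Proof.
have hc : (fun k => g k (x + y) - (g k x + g k y)) @ \oo --> D (x + y) - (D x + D y).
  by apply: cvgB; [exact: cvg_g | apply: cvgD; exact: cvg_g].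
apply/eqP; rewrite -subr_eq0; apply/eqP.
apply: (@lim_geo0 _ _ (theta * (nrm (x + y) `^ p + nrm (x - y) `^ p)) hc).
  by rewrite mulr_ge0 // addr_ge0 // powR_ge0.
move=> k; rewrite /g -scalerDr -scalerBr cV nrmZ ger0_norm ?invr_ge0 ?exprn_ge0 //.
rewrite opprD addrA scalerDr.
apply: le_trans (ler_wpM2l _ (add_approx _ _)) _.
  by rewrite invr_ge0 exprn_ge0.
rewrite -scalerDr -scalerBr !c_nrm !powRM ?exprn_ge0 ?nrm_ge0 // pw2.
rewrite /rr exprMn exprVn; apply: eqle; ring.
Qed.

Lemma Dmu mu x : `|mu| = 1 -> D (mu *: x) = mu *: D x.
Proof.
move=> hmu.
have hc : (fun k => g k (mu *: x) - mu *: g k x) @ \oo --> D (mu *: x) - mu *: D x.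
  by apply: cvgB; [exact: cvg_g | apply: cvgZl_tmp; exact: cvg_g].
apply/eqP; rewrite -subr_eq0; apply/eqP.
apply: (@lim_geo0 _ _ (theta * (2 * nrm x `^ p)) hc).
  by rewrite mulr_ge0 // mulr_ge0 // powR_ge0.
move=> k; rewrite /g [mu *: (_ *: _)]scalerA [mu * _]mulrC -scalerA -scalerBr.
rewrite cV nrmZ ger0_norm ?invr_ge0 ?exprn_ge0 //.
rewrite [c k *: (mu *: x)]scalerA [c k * mu]mulrC -scalerA.
apply: le_trans (ler_wpM2l _ (@mu_approx mu (c k *: x) hmu)) _.
  by rewrite invr_ge0 exprn_ge0.
rewrite !c_nrm !powRM ?exprn_ge0 ?nrm_ge0 // pw2.
rewrite /rr exprMn exprVn; apply: eqle; ring.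
Qed.
Lemma D0 : D 0 = 0.
Proof.
have h := Dadd 0 0; rewrite addr0 in h.
by apply: (addrI (D 0)); rewrite -h addr0.
Qed.

Lemma Dnat k x : D (k%:R *: x) = k%:R *: D x.
Proof.
elim: k => [|k IH]; first by rewrite !scale0r D0.
by rewrite mulrSr !scalerDl !scale1r Dadd IH.
Qed.

Lemma unitc (t : R) : t ^+ 2 <= 1 -> `|(t +i* Num.sqrt (1 - t ^+ 2)) : R[i]| = 1.
Proof.
move=> ht1; rewrite normc_def /= sqr_sqrtr ?subr_ge0 //.
by rewrite addrC subrK sqrtr1.
Qed.
Lemma unitc' (t : R) : t ^+ 2 <= 1 -> `|(t +i* (- Num.sqrt (1 - t ^+ 2))) : R[i]| = 1.
Proof.
move=> ht1; rewrite normc_def /= sqrrN sqr_sqrtr ?subr_ge0 //.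
by rewrite addrC subrK sqrtr1.
Qed.

Lemma Dreal r x : D (r%:C *: x) = r%:C *: D x.
Proof.
set Mn := Num.Def.archi_bound `|r|.
have hM : `|r| < Mn%:R := archi_boundP (normr_ge0 r).
have M0 : (0 : R) < Mn%:R by apply: le_lt_trans hM.
set t := r / Mn%:R / 2.
have ht1 : t ^+ 2 <= 1.
  have : `|t| <= 1.
    rewrite /t !normrM !normrV ?unitfE ?pnatr_eq0 ?gt_eqF // !normr_nat.
    rewrite ler_pdivrMr // mul1r ler_pdivrMr //.
    by have := ltW hM; have := M0; lra.
  move=> h; rewrite -real_normK ?num_real // expr2.
  by have := normr_ge0 t; nra.
set u : R[i] := t +i* Num.sqrt (1 - t ^+ 2).
set v : R[i] := t +i* (- Num.sqrt (1 - t ^+ 2)).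
have e : r%:C = Mn%:R * (u + v).
  rewrite -(rmorph_nat (real_complex R)) /u /v.
  have -> : (t +i* Num.sqrt (1 - t ^+ 2)) + (t +i* - Num.sqrt (1 - t ^+ 2)) = (t + t)%:C.
    by apply/eqP; rewrite eq_complex /= subrr eqxx eqxx.
  rewrite -rmorphM; congr (_%:C); rewrite /t; field.
  by rewrite gt_eqF.
rewrite e -scalerA Dnat scalerDl Dadd !Dmu ?unitc ?unitc' //.
by rewrite -scalerDl scalerA.
Qed.

Lemma Dlin (cc : R[i]) x y : D (cc *: x + y) = cc *: D x + D y.
Proof.
rewrite Dadd; congr (_ + _); case: cc => a b.
have -> : a +i* b = a%:C + 'i%C * b%:C.
  by simpc.
have hi : `|'i%C : R[i]| = 1.
  by rewrite normc_def /= expr0n /= add0r expr1n sqrtr1.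
by rewrite !scalerDl Dadd Dreal -!scalerA Dmu // Dreal.
Qed.
Lemma Hj b : nrm (f (apow mul b n) - jordan_sum mul n f b) <= theta * nrm b `^ p.
Proof.
have := H 1 0 0 b (normr1 _).
rewrite addr0 subrr scaler0 !scale1r f0 addr0 subr0 add0r.
by rewrite nrm0 pw0 !add0r.
Qed.

Lemma ck0 k : c k != 0.
Proof.
apply/eqP => h; have := congr1 (@complex.Re R) h; rewrite /c /=.
by apply/eqP; rewrite expf_neq0.
Qed.

Lemma step3 k b : nrm (g (k * n) (apow mul b n) - J mul n b (g k b)) <= theta * nrm b `^ p * rr ^+ k.
Proof.
have n0 : (0 < n)%N by lia.
have ec : c (k * n) = c k ^+ n by rewrite /c exprM rmorphXn.
have e1 : g (k * n) (apow mul b n) = (c k ^+ n)^-1 *: f (apow mul (c k *: b) n).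
  by rewrite /g ec (@apow_sc _ hmul n).
have e2 : J mul n b (g k b) = (c k ^+ n)^-1 *: jordan_sum mul n f (c k *: b).
  have -> : jordan_sum mul n f (c k *: b) = J mul n (c k *: b) (f (c k *: b)) by [].
  rewrite /g (@JZ _ hmul n) (@J_sc _ hmul n) scalerA; congr (_ *: _).
  have hn' : n = (n - 1).+1 by lia.
  set m := (n - 1)%N; rewrite hn' exprS invfM -mulrA mulVf ?mulr1 //.
  by rewrite expf_neq0 // ck0.
rewrite e1 e2 -scalerBr -ec cV nrmZ ger0_norm ?invr_ge0 ?exprn_ge0 //.
apply: le_trans (ler_wpM2l _ (Hj _)) _; first by rewrite invr_ge0 exprn_ge0.
rewrite c_nrm powRM ?exprn_ge0 ?nrm_ge0 // pw2.
apply: (le_trans (_ : _ <= theta * nrm b `^ p * (2 `^ p) ^+ k * (2 ^+ (k * n))^-1)).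
  by apply: eqle; ring.
rewrite /rr exprMn exprVn -[X in X <= _]mulrA; apply: ler_wpM2l.
  by rewrite mulr_ge0 // powR_ge0.
apply: ler_wpM2l; first by rewrite exprn_ge0 // powR_ge0.
rewrite lef_pV2 ?posrE ?exprn_gt0 // ler_eXn2l ?ltr1n //.
by rewrite leq_pmulr.
Qed.

Lemma nrm3 (u v w : A) : nrm (u + v + w) <= nrm u + nrm v + nrm w.
Proof.
apply: le_trans (nrmD _ _) _; apply: lerD => //; exact: nrmD.
Qed.

Lemma Djord b : D (apow mul b n) = J mul n b (D b).
Proof.
apply/eqP; rewrite -subr_eq0; apply/eqP; apply: nrm_le0.
apply/ler_addgt0Pr => e e0; rewrite add0r.
set Cb := n%:R * nrm b ^+ (n - 1) + 1.
have Cb0 : 0 < Cb by rewrite ltr_wpDl // mulr_ge0 // exprn_ge0 // nrm_ge0.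
have e3 : 0 < e / 3 by rewrite divr_gt0.
have e3' : 0 < e / 3 / Cb by rewrite divr_gt0.
have [N1 h1] := @lim_eps _ _ (cvg_g (apow mul b n)) _ e3.
have [N2 h2] := @lim_eps _ _ (cvg_g b) _ e3'.
have C0 : 0 <= theta * nrm b `^ p by rewrite mulr_ge0 // powR_ge0.
have [N3 h3] := @geo _ _ C0 e3.
set k := maxn N1 (maxn N2 N3).
have k1 : (N1 <= k * n)%N.
  apply: (leq_trans (leq_maxl N1 (maxn N2 N3))); rewrite leq_pmulr //; lia.
have k2 : (N2 <= k)%N by rewrite /k; clear; lia.
have k3 : (N3 <= k)%N by rewrite /k; clear; lia.
have -> : D (apow mul b n) - J mul n b (D b) =
   - (g (k * n) (apow mul b n) - D (apow mul b n))
   + (g (k * n) (apow mul b n) - J mul n b (g k b))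
   + J mul n b (g k b - D b).
  by rewrite (@JB _ hmul n) opprB !addrA !subrK.
apply: le_trans (nrm3 _ _ _) _.
rewrite [e](_ : e = e / 3 + e / 3 + e / 3); last by field.
apply: lerD; first apply: lerD.
- by rewrite nrmN; exact: ltW (h1 _ k1).
- by apply: le_trans (step3 _ _) _; exact: ltW (h3 _ k3).
- apply: le_trans (@nrmJ _ hmul n _ _) _.
  apply: le_trans (_ : Cb * nrm (g k b - D b) <= _).
    by rewrite mulrA ler_wpM2r ?nrm_ge0 // /Cb lerDl.
  rewrite -ler_pdivlMl // mulrC; exact: ltW (h2 _ k2).
Qed.
Lemma Kc_ge0 : 0 <= Kc.
Proof.
rewrite /Kc divr_ge0 ?mulr_ge0 ?powR_ge0 //.
by rewrite subr_ge0 ltW // two_p_lt2.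
Qed.

Lemma linZ (L : A -> A) : (forall (cc : R[i]) x y, L (cc *: x + y) = cc *: L x + L y) ->
  forall cc x, L (cc *: x) = cc *: L x.
Proof.
move=> hL.
have L0 : L 0 = 0.
  have := hL 1 0 0; rewrite scaler0 addr0 scale1r => h.
  by apply: (addrI (L 0)); rewrite -h addr0.
by move=> cc x; have := hL cc x 0; rewrite !addr0 L0 addr0.
Qed.

Lemma uniq_lin (D1 D2 : A -> A) :
  (forall (cc : R[i]) x y, D1 (cc *: x + y) = cc *: D1 x + D1 y) ->
  (forall (cc : R[i]) x y, D2 (cc *: x + y) = cc *: D2 x + D2 y) ->
  (forall x, nrm (f x - D1 x) <= Kc * nrm x `^ p) ->
  (forall x, nrm (f x - D2 x) <= Kc * nrm x `^ p) -> D1 = D2.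
Proof.
move=> l1 l2 b1 b2; apply: funext => x; apply/eqP; rewrite -subr_eq0; apply/eqP.
have hc : (fun _ : nat => D1 x - D2 x) @ \oo --> D1 x - D2 x by exact: cvg_cst.
apply: (@lim_geo0 _ _ (2 * Kc * nrm x `^ p) hc).
  by rewrite mulr_ge0 ?powR_ge0 // mulr_ge0 // Kc_ge0.
move=> k.
have -> : D1 x - D2 x = (c k)^-1 *: ((D1 (c k *: x) - f (c k *: x)) + (f (c k *: x) - D2 (c k *: x))).
  rewrite addrA subrK (@linZ D1 l1) (@linZ D2 l2) -scalerBr scalerA mulVf ?scale1r //.
  exact: ck0.
rewrite cV nrmZ ger0_norm ?invr_ge0 ?exprn_ge0 //.
apply: le_trans (ler_wpM2l _ (nrmD _ _)) _; first by rewrite invr_ge0 exprn_ge0.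
apply: le_trans (ler_wpM2l _ (lerD (_ : _ <= Kc * nrm (c k *: x) `^ p) (b2 _))) _.
- by rewrite invr_ge0 exprn_ge0.
- by rewrite nrmB.
rewrite c_nrm powRM ?exprn_ge0 ?nrm_ge0 // pw2 /rr exprMn exprVn.
by apply: eqle; ring.
Qed.

Lemma main_res :
  exists D : A -> A,
    [/\ n_jordan_derivation mul n D,
        (forall x, nrm (f x - D x)
                   <= (2 `^ p * theta) / (2 - 2 `^ p) * nrm x `^ p)
      & (forall D' : A -> A, n_jordan_derivation mul n D' ->
           (forall x, nrm (f x - D' x)
                      <= (2 `^ p * theta) / (2 - 2 `^ p) * nrm x `^ p) ->
           D' = D)].
Proof.
exists D; split.
- split; first exact: Dlin.
  by move=> a; rewrite Djord.
- exact: D_bound.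
- move=> D' [l' _] b'; apply: uniq_lin => //; first exact: Dlin.
  exact: D_bound.
Qed.
End Main.
End S.

Theorem corollary2p3 (R : realType) (A : completeNormedModType R[i])
    (mul : A -> A -> A) (n : nat) (p theta : R) (f : A -> A) :
  banach_algebra_mul mul ->
  (2 <= n)%N ->
  0 < p < 1 ->
  0 <= theta ->
  (forall (mu : R[i]) (x y a : A), `|mu| = 1 ->
     nrm (mu *: f ((2%:R : R[i])^-1 *: (x + y))
          + mu *: f ((2%:R : R[i])^-1 *: (x - y))
          - f (mu *: x)
          + f (apow mul a n)
          - jordan_sum mul n f a)
     <= theta * (nrm x `^ p + nrm y `^ p + nrm a `^ p)) ->
  exists D : A -> A,
    [/\ n_jordan_derivation mul n D,
        (forall x, nrm (f x - D x)
                   <= (2 `^ p * theta) / (2 - 2 `^ p) * nrm x `^ p)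
      & (forall D' : A -> A, n_jordan_derivation mul n D' ->
           (forall x, nrm (f x - D' x)
                      <= (2 `^ p * theta) / (2 - 2 `^ p) * nrm x `^ p) ->
           D' = D)].
Proof. by move=> hm hn hp ht H; apply: main_res. Qed.
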